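(* Let $(k,|\cdot|)$ be a complete non-Archimedean field of characteristic $p>0$ with nontrivial value group. Then for every $n>0$ the Tate algebra $T_n(k)$ is Frobenius split in each of the following cases: (i) $(k,|\cdot|)$ is spherically complete; (ii) $k^{1/p}$ has a dense $k$-subspace $V$ having a countable $k$-basis (in particular if $[k^{1/p}:k]<\infty$); (iii) $|k^\times|$ is not discrete and the norm on $k^{1/p}$ is polar.
   Context: A non-Archimedean field is a field with a multiplicative absolute value satisfying the ultrametric inequality, assumed complete with nontrivial value group $|k^\times|$. $T_n(k)$ is the subring of $k[[X_1,\dots,X_n]]$ of series $\sum_\nu a_\nu X^\nu$ with $|a_\nu|\to0$ as $|\nu|\to\infty$. A ring $R$ of characteristic $p$ is Frobenius split if there is an $R$-linear map $\phi\colon F_{R*}R\to R$ with $\phi(1)=1$, where $F_{R*}R$ is $R$ with module structure $r\cdot x=r^px$. $k$ is spherically complete if every decreasing sequence of closed disks $D_1\supseteq D_2\supseteq\cdots$ in $k$ has nonempty intersection. $k^{1/p}$ carries the unique absolute value extending that of $k$ and is a normed $k$-vector space. A norm $\|\cdot\|$ on a normed $k$-space $E$ is polar if for every $x\in E$ with $\|x\|>1$ there is a $k$-linear functional $f\colon E\to k$ with $|f(y)|\le1$ for all $y$ with $\|y\|\le1$ and $|f(x)|>1$. *)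

(* Defs.v *)
From Stdlib Require Import Reals.
From HB Require Import structures.
From mathcomp Require Import all_boot all_order all_algebra.
Set Implicit Arguments. Unset Strict Implicit. Unset Printing Implicit Defensive.
Import GRing.Theory.
Local Open Scope ring_scope.

Section Valued.
Variable k : fieldType.
Variable abs : k -> R.

Definition nonarch_abs : Prop :=
  (forall x, Rle R0 (abs x)) /\
  (forall x, abs x = R0 <-> x = 0) /\
  (forall x y, abs (x * y) = Rmult (abs x) (abs y)) /\
  (forall x y, Rle (abs (x + y)) (Rmax (abs x) (abs y))).

Definition abs_complete : Prop :=
  forall u : nat -> k,
    (forall eps, Rlt R0 eps -> exists N : nat,
        forall m m', (N <= m)%N -> (N <= m')%N -> Rlt (abs (u m - u m')) eps) ->
    exists l : k, forall eps, Rlt R0 eps -> exists N : nat,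
        forall m, (N <= m)%N -> Rlt (abs (u m - l)) eps.

Definition nontrivial_value_group : Prop :=
  exists a : k, a <> 0 /\ abs a <> R1.

(** |k^x| is not discrete (1 is not an isolated point of |k^x| in R_{>0}). *)
Definition value_group_not_discrete : Prop :=
  forall eps, Rlt R0 eps ->
    exists a : k, a <> 0 /\ abs a <> R1 /\ Rlt (Rabs (Rminus (abs a) R1)) eps.

Definition cdisk (c : k) (r : R) (x : k) : Prop := Rle (abs (x - c)) r.

Definition spherically_complete : Prop :=
  forall (c : nat -> k) (r : nat -> R),
    (forall m, Rlt R0 (r m)) ->
    (forall m x, cdisk (c m.+1) (r m.+1) x -> cdisk (c m) (r m) x) ->
    exists x, forall m, cdisk (c m) (r m) x.

(** The normed k-vector space k^{1/p}, modelled through the Frobenius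
    isomorphism y = x^{1/p} <-> x : an element x of k stands for x^{1/p};
    addition is addition in k, the scalar action is lam . x = lam^p x
    (since lam x^{1/p} = (lam^p x)^{1/p}), and the norm is
    ||x^{1/p}|| = |x|^{1/p}. *)
Variable p : nat.
Definition kp_scale (lam x : k) : k := lam ^+ p * x.
Definition kp_norm (x : k) : R :=
  if x == 0 then R0 else Rpower (abs x) (Rinv (INR p)).

Definition kp_comb (e : nat -> k) (s : seq nat) (c : nat -> k) : k :=
  \sum_(i <- s) kp_scale (c i) (e i).

Definition kp_subspace (V : k -> Prop) : Prop :=
  V 0 /\ (forall x y, V x -> V y -> V (x + y)) /\
  (forall lam x, V x -> V (kp_scale lam x)).

Definition kp_dense (V : k -> Prop) : Prop :=
  forall x eps, Rlt R0 eps -> exists v, V v /\ Rlt (kp_norm (x - v)) eps.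

Definition kp_countable_basis (V : k -> Prop) : Prop :=
  exists (S : nat -> Prop) (e : nat -> k),
    (forall i, S i -> V (e i)) /\
    (forall (s : seq nat) (c : nat -> k), uniq s -> (forall i, i \in s -> S i) ->
        kp_comb e s c = 0 -> forall i, i \in s -> c i = 0) /\
    (forall x, V x -> exists (s : seq nat) (c : nat -> k),
        uniq s /\ (forall i, i \in s -> S i) /\ x = kp_comb e s c).

Definition case_ii : Prop :=
  exists V : k -> Prop, kp_subspace V /\ kp_dense V /\ kp_countable_basis V.

Definition kp_linear (f : k -> k) : Prop :=
  (forall x y, f (x + y) = f x + f y) /\
  (forall lam x, f (kp_scale lam x) = lam * f x).

Definition kp_norm_polar : Prop :=
  forall x, Rlt R1 (kp_norm x) ->
    exists f : k -> k, kp_linear f /\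
      (forall y, Rle (kp_norm y) R1 -> Rle (abs (f y)) R1) /\
      Rlt R1 (abs (f x)).

Variable n : nat.
Definition mindex := {ffun 'I_n -> nat}.
Definition series := mindex -> k.
Definition mdeg (nu : mindex) : nat := (\sum_(i < n) nu i)%N.

Definition tate (a : series) : Prop :=
  forall eps, Rlt R0 eps -> exists N : nat,
    forall nu : mindex, (N <= mdeg nu)%N -> Rlt (abs (a nu)) eps.

Definition sadd (a b : series) : series := fun nu => a nu + b nu.
Definition sone : series := fun nu => if nu == [ffun => 0%N] then 1 else 0.
(** Cauchy product: (ab)_nu = sum_{mu <= nu} a_mu b_{nu - mu}. *)
Definition smul (a b : series) : series := fun nu =>
  \sum_(mu : {ffun 'I_n -> 'I_(mdeg nu).+1} | [forall i, (mu i <= nu i)%N])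
     a [ffun i => nat_of_ord (mu i)] * b [ffun i => (nu i - mu i)%N].
Definition spow (a : series) (m : nat) : series := iter m (smul a) sone.

(** T_n(k) is Frobenius split: there is phi : T_n -> T_n, additive, with
    phi(r^p x) = r phi(x) (i.e. T_n-linear F_* T_n -> T_n) and phi(1) = 1. *)
Definition tate_frobenius_split : Prop :=
  exists phi : series -> series,
    (forall x, tate x -> tate (phi x)) /\
    (forall x y, tate x -> tate y -> phi (sadd x y) = sadd (phi x) (phi y)) /\
    (forall r x, tate r -> tate x -> phi (smul (spow r p) x) = smul r (phi x)) /\
    phi sone = sone.

End Valued.

(* Main.v *)
Require Import Defs.
From Stdlib Require Import Reals Lra Lia Classical IndefiniteDescription ClassicalEpsilon FunctionalExtensionality.
From HB Require Import structures.
From mathcomp Require Import all_boot all_order all_algebra.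
From mathcomp Require Import mpoly.
From mathcomp Require Import ring.
From mathcomp Require Import boolp classical_sets.
Set Implicit Arguments. Unset Strict Implicit. Unset Printing Implicit Defensive.
Import GRing.Theory.

Section PartA1.
Local Open Scope ring_scope.

Section SeriesAlg.
Variables (k : fieldType) (n : nat).

Definition Box (d : nat) := {ffun 'I_n -> 'I_d.+1}.
Definition fv d (mu : Box d) : mindex n := [ffun i => nat_of_ord (mu i)].
Definition leM (a b : mindex n) : bool := [forall i, (a i <= b i)%N].
Definition subM (a b : mindex n) : mindex n := [ffun i => (a i - b i)%N].
Definition toM (a : mindex n) : 'X_{1..n} := [multinom a i | i < n].
Definition bnd d (a : mindex n) := forall i, (a i <= d)%N.

Lemma fv_inj d : injective (@fv d).
Proof.
move=> m1 m2 /ffunP E; apply/ffunP => i; apply/val_inj.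
by move: (E i); rewrite !ffunE.
Qed.

Lemma toM_inj : injective toM.
Proof.
move=> a b /mnmP E; apply/ffunP => i; by move: (E i); rewrite !mnmE.
Qed.

Lemma bnd_fv d (mu : Box d) : bnd d (fv mu).
Proof. by move=> i; rewrite ffunE -ltnS. Qed.

Definition tobox d (a : mindex n) : Box d := [ffun i => inord (a i)].

Lemma fv_tobox d a : bnd d a -> fv (tobox d a) = a.
Proof. by move=> h; apply/ffunP => i; rewrite !ffunE inordK // ltnS. Qed.

Lemma smulE (a b : series k n) nu :
  smul a b nu = \sum_(mu : Box (Defs.mdeg nu) | leM (fv mu) nu)
     a (fv mu) * b (subM nu (fv mu)).
Proof.
rewrite /smul; apply: eq_big => [mu|mu _].
  by apply: eq_forallb => i; rewrite ffunE.
congr (_ * _); congr b; apply/ffunP => i; by rewrite !ffunE.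
Qed.

Lemma box_change d1 d2 nu (F : mindex n -> k) :
  bnd d1 nu -> bnd d2 nu ->
  \sum_(mu : Box d1 | leM (fv mu) nu) F (fv mu) =
  \sum_(mu : Box d2 | leM (fv mu) nu) F (fv mu).
Proof.
move=> h1 h2.
have key : forall d (mu : Box d), leM (fv mu) nu -> bnd d1 (fv mu) /\ bnd d2 (fv mu).
  move=> d mu /forallP le; split => i; apply: leq_trans (le i) _; [exact: h1|exact: h2].
rewrite (reindex_onto (tobox d1 \o @fv d2) (tobox d2 \o @fv d1)) /=; last first.
  move=> mu le; have [b1 b2] := key _ _ le.
  by apply: fv_inj; rewrite !fv_tobox.
apply: eq_big => [mu|mu /andP[le /eqP E]].
  case: (boolP (leM (fv mu) nu)) => le.
    have [b1 b2] := key _ _ le.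
    by rewrite fv_tobox // le /=; apply/eqP; apply: fv_inj; rewrite !fv_tobox.
  apply/negbTE; apply/negP => /andP[le' /eqP E].
  have [b1 b2] := key _ _ le'.
  have E' : fv (tobox d1 (fv mu)) = fv mu.
    by have := f_equal (@fv d2) E; rewrite fv_tobox.
  by move: le'; rewrite E' (negbTE le).
have [b1 b2] := key _ _ le.
by have := f_equal (@fv d2) E; rewrite fv_tobox // => ->.
Qed.

Definition polA d (a : series k n) : {mpoly k[n]} :=
  \sum_(mu : Box d) a (fv mu) *: 'X_[toM (fv mu)].

Lemma coefXM m (B : {mpoly k[n]}) t :
  ('X_[m] * B)@_t = if (m <= t)%MM then B@_(t - m) else 0.
Proof.
case: ifP => h.
  by rewrite mulrC -{1}(submK h) addmC mcoeffMX.
rewrite {1}(mpolyE B) mulr_sumr raddf_sum /=; apply: big1 => m' _.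
rewrite -scalerAr -mpolyXD mcoeffZ mcoeffX.
case: eqP => [E|_]; last by rewrite mulr0.
by move: h; rewrite -E lem_addr.
Qed.

Lemma leM_toM a b : leM a b = (toM a <= toM b)%MM.
Proof.
apply/forallP/mnm_lepP => h i; by move: (h i); rewrite ?mnmE.
Qed.

Lemma toM_sub a b : toM (subM a b) = (toM a - toM b)%MM.
Proof. by apply/mnmP => i; rewrite mnmBE !mnmE ffunE. Qed.

Lemma coefMA d a B nu : bnd d nu ->
  (polA d a * B)@_(toM nu) =
  \sum_(mu : Box d | leM (fv mu) nu) a (fv mu) * B@_(toM (subM nu (fv mu))).
Proof.
move=> hb; rewrite mulr_suml raddf_sum /= (big_mkcond (fun mu => leM _ _)) /=.
apply: eq_bigr => mu _; rewrite -scalerAl mcoeffZ coefXM leM_toM toM_sub.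
by case: ifP => _; rewrite ?mulr0.
Qed.

Lemma sum_box_eq d t (P : pred (mindex n)) (G : mindex n -> k) :
  (P t -> bnd d t) ->
  \sum_(mu : Box d | P (fv mu)) (fv mu == t)%:R * G (fv mu) = (P t)%:R * G t.
Proof.
move=> hb; case: (boolP (P t)) => Pt.
  have bt := hb Pt.
  rewrite (bigD1 (tobox d t)) /= fv_tobox // ?eqxx ?Pt // mul1r big1 ?addr0 //.
  move=> mu /andP[_ ne]; case: eqP => [E|_]; last by rewrite mul0r.
  have E2 : mu = tobox d t.
    by apply: fv_inj; rewrite -E fv_tobox //; exact: bnd_fv.
  by rewrite E2 eqxx in ne.
rewrite mul0r big1 // => mu Pmu; case: eqP => [E|_]; last by rewrite mul0r.
by move: Pt; rewrite -E Pmu.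
Qed.

Lemma coefA d a nu : bnd d nu -> (polA d a)@_(toM nu) = a nu.
Proof.
move=> hb; rewrite -[polA d a]mulr1 coefMA //.
have -> : \sum_(mu : Box d | leM (fv mu) nu) a (fv mu) * 1@_(toM (subM nu (fv mu)))
   = \sum_(mu : Box d | leM (fv mu) nu) (fv mu == nu)%:R * a (fv mu).
  apply: eq_bigr => mu le; rewrite mcoeff1 mulrC.
  suff -> : (toM (subM nu (fv mu)) == 0%MM) = (fv mu == nu) by [].
  apply/eqP/eqP => [E|->].
    apply/ffunP => i; move: (f_equal (fun m : 'X_{1..n} => m i) E).
    rewrite mnmE mnm0E ffunE => /eqP; rewrite subn_eq0 => h.
    by apply/eqP; rewrite eqn_leq h; move/forallP: le => ->.
  by apply/mnmP => i; rewrite mnmE mnm0E ffunE subnn.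
have hl : leM nu nu by apply/forallP.
by rewrite (@sum_box_eq d nu (fun m => leM m nu) a) /= ?hl ?mul1r.
Qed.

Lemma bnd_mdeg nu : bnd (Defs.mdeg nu) nu.
Proof. by move=> i; rewrite /Defs.mdeg (bigD1 i) //= leq_addr. Qed.

Lemma toM_eq0 nu : (toM nu == 0%MM) = (nu == [ffun => 0%N]).
Proof.
apply/eqP/eqP => [E|->].
  by apply/ffunP => i; move: (f_equal (fun m : 'X_{1..n} => m i) E); rewrite mnmE mnm0E ffunE.
by apply/mnmP => i; rewrite mnmE mnm0E ffunE.
Qed.

Lemma spow_coef d r q nu : bnd d nu -> spow r q nu = ((polA d r) ^+ q)@_(toM nu).
Proof.
elim: q nu => [|q IH] nu hb.
  by rewrite expr0 mcoeff1 /spow /= /sone toM_eq0; case: eqP.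
rewrite exprS coefMA //.
change (spow r q.+1 nu) with (smul r (spow r q) nu); rewrite smulE.
rewrite (@box_change _ d nu (fun m => r m * spow r q (subM nu m))) //; last exact: bnd_mdeg.
apply: eq_bigr => mu le; rewrite IH // => i; rewrite ffunE.
exact: leq_trans (leq_subr _ _) (hb i).
Qed.

Variables (p : nat) (hchar : p \in [pchar k]).
Definition pM (a : mindex n) : mindex n := [ffun i => (a i * p)%N].

Lemma toM_pM a : toM (pM a) = (toM a *+ p)%MM.
Proof. by apply/mnmP => i; rewrite mulmnE !mnmE ffunE. Qed.

Lemma polA_p d r : (polA d r) ^+ p =
  \sum_(mu : Box d) (r (fv mu))^+p *: 'X_[(toM (fv mu) *+ p)%MM].
Proof.
have hc : p \in [pchar {mpoly k[n]}] := rmorph_pchar (@mpolyC n k) hchar.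
rewrite -(pFrobenius_autE hc) /polA rmorph_sum; apply: eq_bigr => mu _.
by rewrite /= pFrobenius_autE exprZn mpolyXn.
Qed.

Lemma spowp_coef d (r : series k n) nu : bnd d nu ->
  spow r p nu = \sum_(mu : Box d) r (fv mu) ^+ p * (pM (fv mu) == nu)%:R.
Proof.
move=> hb; rewrite (spow_coef r p hb) polA_p raddf_sum; apply: eq_bigr => mu _.
by rewrite /= mcoeffZ mcoeffX -toM_pM (inj_eq toM_inj).
Qed.

Lemma p_gt0 : (0 < p)%N.
Proof. by apply: prime_gt0; apply: (pcharf_prime hchar). Qed.

Variable psi : k -> k.
Hypothesis psiD : forall x y, psi (x + y) = psi x + psi y.
Hypothesis psiS : forall l x, psi (l ^+ p * x) = l * psi x.

Lemma psi0 : psi 0 = 0.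
Proof. by have := psiS 0 0; rewrite mulr0 mul0r. Qed.

Lemma psi_sum (I : finType) (P : pred I) (F : I -> k) :
  psi (\sum_(i | P i) F i) = \sum_(i | P i) psi (F i).
Proof. exact: (big_morph psi psiD psi0). Qed.

Definition phiS (x : series k n) : series k n := fun mu => psi (x (pM mu)).

Lemma leM_pM a b : leM (pM a) (pM b) = leM a b.
Proof. by apply: eq_forallb => i; rewrite !ffunE leq_pmul2r // p_gt0. Qed.

Lemma subM_pM a b : subM (pM a) (pM b) = pM (subM a b).
Proof. by apply/ffunP => i; rewrite !ffunE mulnBl. Qed.

Lemma phi_frob (r x : series k n) mu :
  phiS (smul (spow r p) x) mu = smul r (phiS x) mu.
Proof.
rewrite /phiS !smulE.
set D := Defs.mdeg (pM mu).
have bD : bnd D (pM mu) := bnd_mdeg _.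
have bmu : bnd D mu.
  move=> i; apply: leq_trans (bD i); rewrite ffunE leq_pmulr //; exact: p_gt0.
under eq_bigr => m _ do rewrite (spowp_coef r (bnd_fv m)) mulr_suml.
rewrite exchange_big /=.
under eq_bigr => b _.
  rewrite (eq_bigr (fun m : Box D => r (fv b) ^+ p *
      ((fv m == pM (fv b))%:R * x (subM (pM mu) (fv m))))); last first.
    by move=> m _; rewrite eq_sym mulrA.
  rewrite -mulr_sumr.
  rewrite (@sum_box_eq D (pM (fv b)) (fun m => leM m (pM mu))
              (fun m => x (subM (pM mu) m))); last first.
    by move=> /forallP le i; apply: leq_trans (le i) (bD i).
  rewrite leM_pM subM_pM.
  over.
rewrite psi_sum /=.
rewrite (@box_change (Defs.mdeg mu) D mu (fun m => r m * psi (x (pM (subM mu m))))) //;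
  last exact: bnd_mdeg.
rewrite (big_mkcond (fun m => leM (fv m) mu)) /=.
apply: eq_bigr => b _; case: ifP => _.
  by rewrite mul1r psiS.
by rewrite mul0r mulr0 psi0.
Qed.
End SeriesAlg.

End PartA1.

Section PartA2.
Local Open Scope R_scope.

Lemma kp_norm_small (k : fieldType) (abs : k -> R) (p : nat) (C eps : R) :
  (0 < p)%N -> nonarch_abs abs -> Rlt R0 eps ->
  exists delta, Rlt R0 delta /\
    forall y, Rlt (abs y) delta -> Rlt (Rmult C (kp_norm abs p y)) eps.
Proof.
move=> pg0 [abs0 [abs_eq0 _]] he.
set C1 := (Rabs C + 1).
have hC1 : (0 < C1) by rewrite /C1; have := Rabs_pos C; lra.
have hp : (0 < INR p) by apply: lt_0_INR; apply/ltP.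
exists (Rpower (eps / C1) (INR p)); split; first exact: exp_pos.
move=> y hy; rewrite /kp_norm; case: eqP => [_|ny].
  by rewrite Rmult_0_r.
have hay := abs0 y.
have hlt : (Rpower (abs y) (/ INR p) < eps / C1).
  have -> : (eps / C1 = Rpower (Rpower (eps / C1) (INR p)) (/ INR p)).
    rewrite Rpower_mult Rinv_r; last lra.
    rewrite Rpower_1 //; apply: Rdiv_lt_0_compat; lra.
  apply: Rlt_Rpower_l; first by apply: Rinv_0_lt_compat.
  split => //; case: (Rle_lt_or_eq_dec _ _ hay) => // h0.
  by case: ny; apply/abs_eq0.
have hpos : (0 <= Rpower (abs y) (/ INR p)) by left; apply: exp_pos.
have : (Rabs C * Rpower (abs y) (/ INR p) <= Rabs C * (eps / C1)).
  apply: Rmult_le_compat_l; [apply: Rabs_pos| lra].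
have : (C * Rpower (abs y) (/ INR p) <= Rabs C * Rpower (abs y) (/ INR p)).
  apply: Rmult_le_compat_r => //; apply: Rle_abs.
have : (Rabs C * (eps / C1) < eps).
  rewrite /Rdiv -Rmult_assoc; apply (Rmult_lt_reg_r C1) => //.
  rewrite Rmult_assoc Rinv_l; last lra.
  rewrite /C1; have := Rabs_pos C; nra.
lra.
Qed.

Lemma mdeg_pM (n p : nat) (mu : mindex n) :
  (0 < p)%N -> (Defs.mdeg mu <= Defs.mdeg (pM p mu))%N.
Proof.
move=> hp; rewrite /Defs.mdeg; apply: leq_sum => i _.
by rewrite ffunE leq_pmulr.
Qed.

Lemma split_of_psi (k : fieldType) (abs : k -> R) (p n : nat)
  (hchar : p \in [pchar k]%R) (habs : nonarch_abs abs)
  (psi : k -> k) (psiD : forall x y, psi (x + y)%R = (psi x + psi y)%R)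
  (psiS : forall l x, psi (l ^+ p * x)%R = (l * psi x)%R)
  (psi1 : psi 1%R = 1%R) (C : R)
  (hC : forall x, abs (psi x) <= C * kp_norm abs p x) :
  tate_frobenius_split abs p n.
Proof.
have hp := p_gt0 hchar.
exists (phiS p psi); split; [|split; [|split]].
- move=> x tx eps he.
  have [delta [hd hy]] := kp_norm_small C hp habs he.
  have [N hN] := tx delta hd.
  exists N => mu hmu; rewrite /phiS.
  apply: Rle_lt_trans (hC _) _; apply: hy; apply: hN.
  exact: leq_trans hmu (mdeg_pM mu hp).
- move=> x y _ _; apply: functional_extensionality => mu.
  by rewrite /phiS /sadd psiD.
- move=> r x _ _; apply: functional_extensionality => mu.
  exact: phi_frob.
- apply: functional_extensionality => mu; rewrite /phiS /sone.
  have -> : (pM p mu == [ffun=> 0%N]) = (mu == [ffun=> 0%N]).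
    apply/eqP/eqP => [E|->]; apply/ffunP => i.
      move: (f_equal (fun f : mindex n => f i) E); rewrite !ffunE => /eqP.
      by rewrite muln_eq0 (negbTE (lt0n_neq0 hp)) orbF => /eqP.
    by rewrite !ffunE.
  case: ifP => _ //.
  by have := psiS 0%R 0%R; rewrite GRing.mulr0 GRing.mul0r.
Qed.

End PartA2.

Section PartB1.
Local Open Scope R_scope.

Section AbsLemmas.
Variables (k : fieldType) (abs : k -> R) (p : nat).
Hypothesis habs : nonarch_abs abs.
Hypothesis hchar : p \in [pchar k]%R.

Lemma abs_ge0 x : 0 <= abs x.
Proof. by case: habs. Qed.
Lemma abs_eq0 x : abs x = 0 <-> x = 0%R.
Proof. by case: habs => _ []. Qed.
Lemma absM x y : abs (x * y)%R = abs x * abs y.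
Proof. by case: habs => _ [] _ []. Qed.
Lemma absD x y : abs (x + y)%R <= Rmax (abs x) (abs y).
Proof. by case: habs => _ [] _ []. Qed.
Lemma abs0 : abs 0%R = 0.
Proof. by apply/abs_eq0. Qed.
Lemma abs_neq0 x : x <> 0%R -> 0 < abs x.
Proof. move=> h; have := abs_ge0 x; case/Rle_lt_or_eq_dec => // /esym/abs_eq0 /h []. Qed.
Lemma abs1 : abs 1%R = 1.
Proof.
have h := absM 1 1; rewrite mulr1 in h.
have h1 : abs 1%R <> 0 by move/abs_eq0; apply/eqP; exact: oner_neq0.
have : abs 1%R * (abs 1%R - 1) = 0 by rewrite Rmult_minus_distr_l Rmult_1_r -h; lra.
case/Rmult_integral => //; lra.
Qed.
Lemma absN1 : abs (-1)%R = 1.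
Proof.
have h := absM (-1) (-1); rewrite mulrNN mulr1 abs1 in h.
have := abs_ge0 (-1)%R; nra.
Qed.
Lemma absN x : abs (- x)%R = abs x.
Proof. by rewrite -mulN1r absM absN1 Rmult_1_l. Qed.
Lemma abs_sym x y : abs (x - y)%R = abs (y - x)%R.
Proof. by rewrite -absN opprB. Qed.
Lemma abs_tri x y z : abs (x - z)%R <= Rmax (abs (x - y)%R) (abs (y - z)%R).
Proof. by have := absD (x - y) (y - z); rewrite addrA subrK. Qed.
Lemma absX x m : abs (x ^+ m)%R = abs x ^ m.
Proof. elim: m => [|m IH]; first by rewrite expr0 abs1. by rewrite exprS absM IH. Qed.
Lemma absV x : x <> 0%R -> abs (x^-1)%R = / abs x.
Proof.
move=> nx; have h := absM x (x^-1); rewrite mulfV in h; last by apply/eqP.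
rewrite abs1 in h; have := abs_neq0 nx => hp.
apply: (Rmult_eq_reg_l (abs x)); last lra.
by rewrite -h Rinv_r //; lra.
Qed.

Lemma p_pos : (0 < p)%N.
Proof. by apply: prime_gt0; apply: (pcharf_prime hchar). Qed.
Lemma INRp_pos : 0 < INR p.
Proof. by apply: lt_0_INR; apply/ltP; exact: p_pos. Qed.

Lemma kp_norm0 : kp_norm abs p 0%R = 0.
Proof. by rewrite /kp_norm eqxx. Qed.
Lemma kp_norm_pos x : x <> 0%R -> 0 < kp_norm abs p x.
Proof. by move=> /eqP nx; rewrite /kp_norm (negbTE nx); apply: exp_pos. Qed.
Lemma kp_norm_ge0 x : 0 <= kp_norm abs p x.
Proof.
case: (eqVneq x 0%R) => [->|/eqP nx]; first by rewrite kp_norm0; lra.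
by left; apply: kp_norm_pos.
Qed.
Lemma kp_norm_eq0 x : kp_norm abs p x = 0 -> x = 0%R.
Proof. by move=> h; case: (eqVneq x 0%R) => [//|/eqP nx]; have := kp_norm_pos nx; lra. Qed.

Lemma kp_norm_le x y : abs x <= abs y -> kp_norm abs p x <= kp_norm abs p y.
Proof.
move=> h; case: (eqVneq x 0%R) => [->|/eqP nx]; first by rewrite kp_norm0; apply: kp_norm_ge0.
have hx := abs_neq0 nx.
have ny : y <> 0%R by move=> E; rewrite E abs0 in h; lra.
rewrite /kp_norm; move/eqP: nx => /negbTE ->; move/eqP: ny => /negbTE ->.
apply: Rle_Rpower_l; first by left; apply: Rinv_0_lt_compat; exact: INRp_pos.
lra.
Qed.

Lemma kp_normD x y : kp_norm abs p (x + y)%R <= Rmax (kp_norm abs p x) (kp_norm abs p y).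
Proof.
case: (Rle_dec (abs x) (abs y)) => h.
  have : abs (x + y)%R <= abs y by have := absD x y; rewrite Rmax_right //.
  move/kp_norm_le => h2; apply: Rle_trans h2 _; apply: Rmax_r.
have : abs (x + y)%R <= abs x by have := absD x y; rewrite Rmax_left //; lra.
move/kp_norm_le => h2; apply: Rle_trans h2 _; apply: Rmax_l.
Qed.

Lemma kp_normN x : kp_norm abs p (- x)%R = kp_norm abs p x.
Proof. by rewrite /kp_norm oppr_eq0 absN. Qed.
Lemma kp_norm_sym x y : kp_norm abs p (x - y)%R = kp_norm abs p (y - x)%R.
Proof. by rewrite -kp_normN opprB. Qed.

Lemma Rpower_pinv a : 0 < a -> Rpower (a ^ p) (/ INR p) = a.
Proof.
move=> ha; rewrite -Rpower_pow // Rpower_mult Rinv_r ?Rpower_1 //.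
have := INRp_pos; lra.
Qed.

Lemma kp_normZ l x : kp_norm abs p (l ^+ p * x)%R = abs l * kp_norm abs p x.
Proof.
have pn0 : (p == 0%N) = false by case: p p_pos.
case: (eqVneq l 0%R) => [->|/eqP nl].
  by rewrite expr0n pn0 mul0r kp_norm0 abs0 Rmult_0_l.
case: (eqVneq x 0%R) => [->|/eqP nx]; first by rewrite mulr0 kp_norm0 Rmult_0_r.
have nlx : (l ^+ p * x)%R <> 0%R.
  apply/eqP; rewrite mulf_eq0 expf_eq0 negb_or negb_and.
  by apply/andP; split; [apply/orP; right|]; apply/eqP.
rewrite /kp_norm; move/eqP: nlx => /negbTE ->; move/eqP: (nx) => /negbTE ->.
rewrite absM absX -Rpower_mult_distr ?Rpower_pinv //.
- exact: abs_neq0.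
- apply: pow_lt; exact: abs_neq0.
- exact: abs_neq0.
Qed.

Lemma kp_norm_pow l : kp_norm abs p (l ^+ p)%R = abs l.
Proof.
by have := kp_normZ l 1; rewrite mulr1 /kp_norm oner_eq0 abs1 /Rpower ln_1 Rmult_0_r exp_0 Rmult_1_r.
Qed.

Lemma frobN1 : ((-1) ^+ p)%R = (-1)%R :> k.
Proof. by rewrite -(pFrobenius_autE hchar) pFrobenius_autN pFrobenius_aut1. Qed.
Lemma frobD (x y : k) : ((x + y) ^+ p)%R = (x ^+ p + y ^+ p)%R.
Proof. by rewrite -!(pFrobenius_autE hchar) rmorphD. Qed.
Lemma frobB (x y : k) : ((x - y) ^+ p)%R = (x ^+ p - y ^+ p)%R.
Proof. by rewrite -!(pFrobenius_autE hchar) rmorphB. Qed.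
Lemma frob_inj (x y : k) : (x ^+ p)%R = (y ^+ p)%R -> x = y.
Proof.
move=> E; apply/eqP; rewrite -subr_eq0; apply/eqP.
have : ((x - y) ^+ p)%R = 0%R by rewrite frobB E subrr.
by move/eqP; rewrite expf_eq0 => /andP[_ /eqP].
Qed.
End AbsLemmas.

End PartB1.

Section PartB2.
Local Open Scope R_scope.

Lemma choice_nat (I : Type) (P : nat -> I -> Prop) :
  (forall m, exists i, P m i) -> exists f : nat -> I, forall m, P m (f m).
Proof.
move=> H; exists (fun m => proj1_sig (IndefiniteDescription.constructive_indefinite_description _ (H m))).
by move=> m; case: (IndefiniteDescription.constructive_indefinite_description _ (H m)).
Qed.

Lemma small_inv e : 0 < e -> exists N : nat, forall m : nat, (N <= m)%N -> / INR (S m) < e.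
Proof.
move=> he; have [N hN] := INR_archimed e 1 he.
exists N => m hm.
have hN1 : INR N <= INR m by apply: le_INR; apply/leP.
have hm1 : 0 < INR (S m) by apply: lt_0_INR; lia.
rewrite S_INR in hm1 *.
apply: (Rmult_lt_reg_l (INR m + 1)) => //.
rewrite Rinv_r; last lra.
nra.
Qed.

Lemma inf_exists (I : Type) (Rr : I -> R) (i0 : I) :
  (forall i, 0 < Rr i) ->
  exists r, 0 <= r /\ (forall i, r <= Rr i) /\ (forall e, 0 < e -> exists i, Rr i < r + e).
Proof.
move=> hpos.
pose E y := exists i, y = - Rr i.
have bE : bound E by exists 0 => y [i ->]; have := hpos i; lra.
have nE : exists y, E y by exists (- Rr i0), i0.
have [m [ub lub]] := completeness E bE nE.
exists (- m); split; [|split].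
- have : m <= 0 by apply: lub => y [i ->]; have := hpos i; lra.
  lra.
- by move=> i; have := ub (- Rr i) (ex_intro _ i erefl); lra.
- move=> e he; apply: NNPP => hn.
  have : m <= m - e.
    apply: lub => y [i ->].
    have : ~ Rr i < - m + e by move=> h; apply: hn; exists i.
    lra.
  lra.
Qed.

Section Balls.
Variables (k : fieldType) (abs : k -> R).
Hypothesis habs : nonarch_abs abs.
Lemma tri' (x y z : k) : abs (x - z)%R <= Rmax (abs (x - y)%R) (abs (y - z)%R).
Proof. exact: abs_tri habs x y z. Qed.
Lemma sym' (x y : k) : abs (x - y)%R = abs (y - x)%R.
Proof. exact: abs_sym habs x y. Qed.

Lemma ball0 (I : Type) (a : I -> k) (Rr : I -> R) :
  abs_complete abs ->
  (forall i j, abs (a i - a j)%R <= Rmax (Rr i) (Rr j)) ->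
  (forall e, 0 < e -> exists i, Rr i < e) ->
  exists c, forall i, abs (c - a i)%R <= Rr i.
Proof.
move=> hcompl hpair hsmall.
have [f hf] : exists f : nat -> I, forall m, Rr (f m) < / INR (S m).
  apply: (@choice_nat I (fun m i => Rr i < / INR (S m))) => m.
  apply: hsmall; apply: Rinv_0_lt_compat; apply: lt_0_INR; lia.
have hR0 : forall i, 0 <= Rr i.
  move=> i; have := hpair i i; rewrite subrr (abs0 habs) Rmax_left; lra.
have hcauchy : forall eps, 0 < eps -> exists N : nat,
    forall m m', (N <= m)%N -> (N <= m')%N -> abs (a (f m) - a (f m'))%R < eps.
  move=> eps he; have [N hN] := small_inv he; exists N => m m' hm hm'.
  apply: Rle_lt_trans (hpair _ _) _; apply: Rmax_lub_lt.
    exact: Rlt_trans (hf m) (hN m hm).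
  exact: Rlt_trans (hf m') (hN m' hm').
have [c hc] := hcompl (fun m => a (f m)) hcauchy.
exists c => i; apply: Rnot_lt_le => hlt.
set E := abs (c - a i)%R in hlt.
have hE : 0 < E by have := hR0 i; lra.
have [N1 hN1] := hc E hE.
have [N2 hN2] := small_inv hE.
set m := maxn N1 N2.
have h1 := hN1 m (leq_maxl _ _).
have h2 := hN2 m (leq_maxr _ _).
have h3 := tri' c (a (f m)) (a i).
have h4 := hpair (f m) i.
rewrite sym' in h1.
have h5 := hf m.
have : Rmax (abs (c - a (f m))%R) (abs (a (f m) - a i)%R) < E.
  apply: Rmax_lub_lt => //; apply: Rle_lt_trans h4 _; apply: Rmax_lub_lt => //.
  lra.
move=> hm; exact: Rlt_irrefl (Rle_lt_trans _ _ _ h3 hm).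
Qed.

Lemma ballSC (I : Type) (a : I -> k) (Rr : I -> R) (i0 : I) :
  spherically_complete abs ->
  (forall i, 0 < Rr i) ->
  (forall i j, abs (a i - a j)%R <= Rmax (Rr i) (Rr j)) ->
  exists c, forall i, abs (c - a i)%R <= Rr i.
Proof.
move=> hsc hpos hpair.
have [r [r0 [rle rinf]]] := inf_exists i0 hpos.
case: (Classical_Prop.classic (exists i1, Rr i1 <= r)) => [[i1 hi1]|hn].
  exists (a i1) => i; apply: Rle_trans (hpair i1 i) _.
  apply: Rmax_lub; [have := rle i; lra|lra].
have hgt : forall i, r < Rr i by move=> i; apply: Rnot_le_lt => h; apply: hn; exists i.
have [f hf] : exists f : nat -> I, forall m, Rr (f m) < r + / INR (S m).
  apply: (@choice_nat I (fun m i => Rr i < r + / INR (S m))) => m.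
  apply: rinf; apply: Rinv_0_lt_compat; apply: lt_0_INR; lia.
pose g := fix g m := match m with
  | O => f O
  | S m' => if Rle_dec (Rr (f (S m'))) (Rr (g m')) then f (S m') else g m' end.
have gdec : forall m, Rr (g (S m)) <= Rr (g m).
  move=> m /=; case: Rle_dec => h; [exact: h | exact: Rle_refl].
have gf : forall m, Rr (g m) <= Rr (f m).
  case=> [|m] /=; first exact: Rle_refl.
  case: Rle_dec => h; [exact: Rle_refl | left; exact: Rnot_le_lt h].
have hnest : forall m x, cdisk abs (a (g (S m))) (Rr (g (S m))) x -> cdisk abs (a (g m)) (Rr (g m)) x.
  move=> m x hx0; have hx : abs (x - a (g (S m)))%R <= Rr (g (S m)) := hx0.
  change (abs (x - a (g m))%R <= Rr (g m)).
  have h3 := tri' x (a (g (S m))) (a (g m)).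
  apply: Rle_trans h3 _; apply: Rmax_lub.
    have := gdec m; lra.
  apply: Rle_trans (hpair _ _) _; apply: Rmax_lub; [have := gdec m|]; lra.
have [c hc] := hsc (fun m => a (g m)) (fun m => Rr (g m)) (fun m => hpos (g m)) hnest.
exists c => i.
have he : 0 < Rr i - r by have := hgt i; lra.
have [N hN] := small_inv he.
have h1 := hN N (leqnn _).
have h2 : abs (c - a (g N))%R <= Rr (g N) := hc N.
have h3 := tri' c (a (g N)) (a i).
have h4 := hpair (g N) i.
have h5 := gf N; have h6 := hf N.
apply: Rle_trans h3 _; apply: Rmax_lub; first lra.
apply: Rle_trans h4 _; apply: Rmax_lub; lra.
Qed.

Lemma ballC (I : Type) (a : I -> k) (Rr : I -> R) (i0 : I) (t : R) :
  abs_complete abs -> 1 < t ->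
  (forall i, 0 < Rr i) ->
  (forall i j, abs (a i - a j)%R <= Rmax (Rr i) (Rr j)) ->
  exists c, forall i, abs (c - a i)%R <= t * Rr i.
Proof.
move=> hcompl ht hpos hpair.
have [r [r0 [rle rinf]]] := inf_exists i0 hpos.
case: (Rle_lt_or_eq_dec _ _ r0) => hr.
  have [i1 hi1] : exists i1, Rr i1 < r + (t - 1) * r by apply: rinf; nra.
  exists (a i1) => i; apply: Rle_trans (hpair i1 i) _.
  apply: Rmax_lub; have := rle i; have := hpos i; nra.
have hsm : forall e, 0 < e -> exists i, Rr i < e.
  by move=> e he; have [i hi] := rinf e he; exists i; lra.
have [c hc] := ball0 hcompl hpair hsm.
by exists c => i; apply: Rle_trans (hc i) _; have := hpos i; nra.
Qed.
End Balls.

End PartB2.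

Section PartB3.
Local Open Scope R_scope.

Section Graphs.
Variables (k : fieldType) (abs : k -> R) (p : nat).
Hypothesis habs : nonarch_abs abs.
Hypothesis hchar : p \in [pchar k]%R.
Local Notation kn := (kp_norm abs p).

Definition gfun (G : k -> k -> Prop) := forall x a b, G x a -> G x b -> a = b.
Definition PG (M : R) (G : k -> k -> Prop) : Prop :=
  gfun G /\ (forall x a y b, G x a -> G y b -> G (x + y)%R (a + b)%R) /\
  (forall l x a, G x a -> G (l ^+ p * x)%R (l * a)%R) /\
  (forall x a, G x a -> abs a <= M * kn x).
Definition B0 (x a : k) := x = (a ^+ p)%R.
Definition gsub (G H : k -> k -> Prop) := forall x a, G x a -> H x a.
Definition dom (G : k -> k -> Prop) x := exists a, G x a.

Lemma pn0 : (p == 0%N) = false.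
Proof. by have := p_pos hchar; case: p. Qed.
Lemma expr0p : (0 ^+ p)%R = 0%R :> k.
Proof. by rewrite expr0n pn0. Qed.

Lemma PG_B0 : PG 1 B0.
Proof.
split; [|split; [|split]].
- by move=> x a b -> /(frob_inj hchar).
- by move=> x a y b -> ->; rewrite /B0 (frobD hchar).
- by move=> l x a ->; rewrite /B0 exprMn.
- by move=> x a ->; rewrite (kp_norm_pow habs hchar); lra.
Qed.

Lemma PG_mono M M' G : M <= M' -> PG M G -> PG M' G.
Proof.
move=> hM [hf [ha [hs hb]]]; split; [|split; [|split]] => //.
move=> x a h; apply: Rle_trans (hb _ _ h) _; apply: Rmult_le_compat_r => //.
exact: kp_norm_ge0.
Qed.

Lemma G_neg M G x a : PG M G -> G x a -> G (- x)%R (- a)%R.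
Proof.
move=> [_ [_ [hs _]]] h; have := hs (-1)%R _ _ h.
by rewrite (frobN1 hchar) !mulN1r.
Qed.

Lemma G_sub M G x a y b : PG M G -> G x a -> G y b -> G (x - y)%R (a - b)%R.
Proof.
move=> hG h1 h2; case: (hG) => _ [ha _]; apply: ha => //; exact: G_neg hG h2.
Qed.

Lemma ext_graph M M' G x c : 0 <= M -> M <= M' -> PG M G -> G 0%R 0%R -> ~ dom G x ->
  (forall d a, G d a -> abs (c - a)%R <= M' * kn (x - d)%R) ->
  exists G', PG M' G' /\ gsub G G' /\ dom G' x.
Proof.
move=> hM0 hMM' hG G00 ndom hc.
have [hf [ha [hs hb]]] := hG.
pose G' z w := exists l d a, G d a /\ z = (l ^+ p * x + d)%R /\ w = (l * c + a)%R.
exists G'; split; [|split].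
- split; [|split; [|split]].
  + move=> z w1 w2 [l [d [a [hda [-> ->]]]]] [l' [d' [a' [hda' [E ->]]]]].
    case: (eqVneq l l') => [el|nl].
      subst l'; have ed : d = d' by apply: (addrI (l ^+ p * x)%R).
      by subst d'; rewrite (hf _ _ _ hda hda').
    exfalso; apply: ndom.
    have nl' : (l - l')%R != 0%R by rewrite subr_eq0.
    exists ((l - l')^-1 * (a' - a))%R.
    have hx : x = (((l - l')^-1) ^+ p * (d' - d))%R.
      have E2 : ((l - l') ^+ p * x)%R = (d' - d)%R.
        apply/eqP; rewrite -subr_eq0; apply/eqP.
        transitivity ((l ^+ p * x + d) - (l' ^+ p * x + d'))%R.
          by rewrite (frobB hchar); ring.
        by rewrite E subrr.
      rewrite -E2 mulrA -exprMn mulVf // expr1n mul1r //.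
    by rewrite hx; apply: hs; apply: (G_sub hG).
  + move=> z1 w1 z2 w2 [l [d [a [hda [-> ->]]]]] [l' [d' [a' [hda' [-> ->]]]]].
    exists (l + l')%R, (d + d')%R, (a + a')%R; split; first exact: ha.
    by rewrite (frobD hchar); split; ring.
  + move=> m z w [l [d [a [hda [-> ->]]]]].
    exists (m * l)%R, (m ^+ p * d)%R, (m * a)%R; split; first exact: hs.
    by rewrite exprMn; split; ring.
  + move=> z w [l [d [a [hda [-> ->]]]]].
    case: (eqVneq l 0%R) => [->|nl].
      rewrite expr0p !mul0r !add0r; apply: Rle_trans (hb _ _ hda) _.
      apply: Rmult_le_compat_r => //; exact: kp_norm_ge0.
    set u := (l^-1)%R.
    have h1 := hc _ _ (hs (- u)%R _ _ hda).
    have e1 : (c - - u * a)%R = (c + u * a)%R by ring.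
    have e2 : (x - (- u) ^+ p * d)%R = (x + u ^+ p * d)%R.
      by rewrite exprNn (frobN1 hchar); ring.
    rewrite e1 e2 in h1.
    have e3 : (l * c + a)%R = (l * (c + u * a))%R.
      by rewrite mulrDr mulrA mulfV ?mul1r.
    have e4 : (l ^+ p * x + d)%R = (l ^+ p * (x + u ^+ p * d))%R.
      by rewrite mulrDr mulrA -exprMn mulfV ?expr1n ?mul1r.
    rewrite e3 e4 (absM habs) (kp_normZ habs hchar).
    have := abs_ge0 habs l; nra.
- move=> d a hda; exists 0%R, d, a; split => //.
  by rewrite expr0p !mul0r !add0r.
- exists c, 1%R, 0%R, 0%R; split => //.
  by rewrite expr1n mul1r mul1r !addr0.
Qed.
End Graphs.

End PartB3.

Section PartB4.
Local Open Scope R_scope.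

Section ZornPart.
Variables (k : fieldType) (abs : k -> R) (p : nat).
Hypothesis habs : nonarch_abs abs.
Hypothesis hchar : p \in [pchar k]%R.

Definition cur (S : set (k * k)) (x a : k) : Prop := S (x, a).

Lemma zorn_total M (Bs : k -> k -> Prop) :
  PG abs p M Bs -> Bs 0%R 0%R ->
  (forall G, PG abs p M G -> gsub Bs G -> forall x, ~ dom G x ->
     exists G', PG abs p M G' /\ gsub G G' /\ dom G' x) ->
  exists A, PG abs p M A /\ gsub Bs A /\ forall x, dom A x.
Proof.
move=> hB hB0 hext.
pose P (S : set (k * k)) := PG abs p M (cur S) /\ (forall z, S z -> gsub Bs (cur S)).
have hchain : forall F : set (set (k * k)), subset F P -> total_on F subset ->
    P (bigcup F id).
  move=> F FP Ftot.
  have mem : forall x a, cur (bigcup F id) x a -> exists2 X, F X & X (x, a).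
    by move=> x a [X FX Xxa]; exists X.
  have two : forall x a y b, cur (bigcup F id) x a -> cur (bigcup F id) y b ->
      exists2 X, F X & X (x, a) /\ X (y, b).
    move=> x a y b /mem [X FX hX] /mem [Y FY hY].
    case: (Ftot X Y FX FY) => sXY; [exists Y => //; split => //; exact: sXY|].
    by exists X => //; split => //; exact: sXY.
  split; [split; [|split; [|split]]|].
  - move=> x a b h1 h2; have [X FX [hX1 hX2]] := two _ _ _ _ h1 h2.
    by have [[hf _] _] := FP X FX; apply: (hf x).
  - move=> x a y b h1 h2; have [X FX [hX1 hX2]] := two _ _ _ _ h1 h2.
    have [[_ [ha _]] _] := FP X FX; exists X => //; exact: ha hX1 hX2.
  - move=> l x a /mem [X FX hX].
    have [[_ [_ [hs _]]] _] := FP X FX; exists X => //; exact: hs hX.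
  - move=> x a /mem [X FX hX].
    have [[_ [_ [_ hb]]] _] := FP X FX; exact: hb hX.
  - move=> [x0 a0] /mem [X FX hX] x a hxa.
    have [_ hc] := FP X FX; have := hc _ hX _ _ hxa.
    by move=> h; exists X.
have [A [PA Amax]] := Zorn_bigcup hchain.
have hBA : gsub Bs (cur A).
  case: (Classical_Prop.classic (exists z, A z)) => [[z Az]|nA]; first exact: (proj2 PA z Az).
  exfalso; apply: (Amax (fun z => Bs z.1 z.2)).
    split; first by move=> z Az; exfalso; apply: nA; exists z.
    by move=> hsub; apply: nA; exists (0%R, 0%R); exact: (hsub (0%R, 0%R) hB0).
  by split => // z _ y b; exact.
exists (cur A); split; first exact: (proj1 PA); split => // x.
apply: NNPP => nd.
have [G' [PG' [sub' [a' ha']]]] := hext _ (proj1 PA) hBA x nd.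
apply: (Amax (fun z => G' z.1 z.2)).
  split; first by move=> [y b] h; exact: sub' _ _ h.
  by move=> h; apply: nd; exists a'; exact: (h (x, a') ha').
split => //; move=> z _ y b hyb; apply: sub'; exact: hBA.
Qed.
End ZornPart.

End PartB4.

Section PartB5.
Local Open Scope R_scope.

Section Cases.
Variables (k : fieldType) (abs : k -> R) (p : nat).
Hypothesis habs : nonarch_abs abs.
Hypothesis hchar : p \in [pchar k]%R.
Local Notation kn := (kp_norm abs p).

Definition psi_good (M : R) (psi : k -> k) :=
  (forall x y, psi (x + y)%R = (psi x + psi y)%R) /\
  (forall l x, psi (l ^+ p * x)%R = (l * psi x)%R) /\ psi 1%R = 1%R /\
  (forall x, abs (psi x) <= M * kn x).

Lemma psi_of_total M A : PG abs p M A -> A 1%R 1%R -> (forall x, dom A x) ->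
  exists psi, psi_good M psi.
Proof.
move=> [hf [ha [hs hb]]] A11 htot.
pose psi x := proj1_sig (IndefiniteDescription.constructive_indefinite_description _ (htot x)).
have hpsi : forall x, A x (psi x).
  by move=> x; rewrite /psi; case: (IndefiniteDescription.constructive_indefinite_description _ _).
exists psi; split; [|split; [|split]].
- by move=> x y; apply: (hf (x + y)%R); [apply: hpsi | apply: ha; apply: hpsi].
- by move=> l x; apply: (hf (l ^+ p * x)%R); [apply: hpsi | apply: hs; apply: hpsi].
- exact: hf (hpsi 1%R) A11.
- by move=> x; apply: hb; apply: hpsi.
Qed.

Lemma pair_bound M G x d a d' a' : 0 <= M -> PG abs p M G -> G d a -> G d' a' ->
  abs (a - a')%R <= Rmax (M * kn (x - d)%R) (M * kn (x - d')%R).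
Proof.
move=> hM hG h1 h2.
have [_ [_ [_ hb]]] := hG.
have := hb _ _ (G_sub hchar hG h1 h2) => h.
apply: Rle_trans h _; rewrite RmaxRmult //; apply: Rmult_le_compat_l => //.
have -> : (d - d')%R = ((d - x) + (x - d'))%R by rewrite addrA subrK.
apply: Rle_trans (kp_normD habs hchar _ _) _.
rewrite (kp_norm_sym p habs d x); exact: Rle_refl.
Qed.

Lemma kdist_pos G x d a : ~ dom G x -> G d a -> 0 < kn (x - d)%R.
Proof.
move=> nd h; apply: kp_norm_pos.
move/eqP; rewrite subr_eq0 => /eqP E; apply: nd; exists a; by rewrite E.
Qed.

Lemma case_i : spherically_complete abs -> exists psi, psi_good 1 psi.
Proof.
move=> hsc.
have hB0 : @B0 k p 0%R 0%R by rewrite /B0 (expr0p hchar).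
have hext : forall G, PG abs p 1 G -> gsub (B0 p) G -> forall x, ~ dom G x ->
    exists G', PG abs p 1 G' /\ gsub G G' /\ dom G' x.
  move=> G PGG subG x nd.
  have G00 : G 0%R 0%R by apply: subG.
  pose I := {z : k * k | G z.1 z.2}.
  pose i0 : I := exist _ (0%R, 0%R) G00.
  have hpos : forall i : I, 0 < 1 * kn (x - (sval i).1)%R.
    by move=> [[d a] h] /=; rewrite Rmult_1_l; apply: kdist_pos nd h.
  have hpair : forall i j : I, abs ((sval i).2 - (sval j).2)%R <=
      Rmax (1 * kn (x - (sval i).1)%R) (1 * kn (x - (sval j).1)%R).
    by move=> [[d a] h] [[d' a'] h'] /=; apply: pair_bound PGG h h'; lra.
  have [c hc] := @ballSC k abs habs I (fun i => (sval i).2)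
     (fun i => 1 * kn (x - (sval i).1)%R) i0 hsc hpos hpair.
  apply: (ext_graph habs hchar (M := 1) (M' := 1) (c := c)) => //; try lra.
  by move=> d a h; exact: (hc (exist _ (d, a) h)).
have [A [PA [sub tot]]] := zorn_total (PG_B0 habs hchar) hB0 hext.
apply: psi_of_total PA _ tot; apply: sub; by rewrite /B0 expr1n.
Qed.
End Cases.

End PartB5.

Section PartB6.
Local Open Scope R_scope.

Section CaseII.
Variables (k : fieldType) (abs : k -> R) (p : nat).
Hypothesis habs : nonarch_abs abs.
Hypothesis hchar : p \in [pchar k]%R.
Hypothesis hcompl : abs_complete abs.
Local Notation kn := (kp_norm abs p).

Definition Mseq (m : nat) : R := 2 - / (2 ^ m).

Lemma Mseq_ge1 m : 1 <= Mseq m.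
Proof.
rewrite /Mseq; have h : 1 <= 2 ^ m by apply: pow_R1_Rle; lra.
have : / 2 ^ m <= 1 by rewrite -Rinv_1; apply: Rinv_le_contravar; lra.
lra.
Qed.
Lemma Mseq_le2 m : Mseq m <= 2.
Proof. rewrite /Mseq; have := pow_lt 2 m ltac:(lra) => h; have := Rinv_0_lt_compat _ h; lra. Qed.
Lemma Mseq_lt m : Mseq m < Mseq (S m).
Proof.
rewrite /Mseq /=; have h := pow_lt 2 m ltac:(lra).
rewrite Rinv_mult; have := Rinv_0_lt_compat _ h; lra.
Qed.

Lemma step_ext m G x : PG abs p (Mseq m) G -> gsub (B0 p) G ->
  exists G', PG abs p (Mseq (S m)) G' /\ gsub G G' /\ dom G' x.
Proof.
move=> PGG subG.
have hM0 : 0 <= Mseq m by have := Mseq_ge1 m; lra.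
case: (Classical_Prop.classic (dom G x)) => [hd|nd].
  exists G; split; [|split] => //; apply: PG_mono PGG; left; exact: Mseq_lt.
have G00 : G 0%R 0%R by apply: subG; rewrite /B0 (expr0p hchar).
pose I := {z : k * k | G z.1 z.2}.
pose i0 : I := exist _ (0%R, 0%R) G00.
have hpos : forall i : I, 0 < Mseq m * kn (x - (sval i).1)%R.
  move=> [[d a] h] /=; apply: Rmult_lt_0_compat; first by have := Mseq_ge1 m; lra.
  exact: (kdist_pos abs p nd h).
have hpair : forall i j : I, abs ((sval i).2 - (sval j).2)%R <=
    Rmax (Mseq m * kn (x - (sval i).1)%R) (Mseq m * kn (x - (sval j).1)%R).
  by move=> [[d a] h] [[d' a'] h'] /=; apply: pair_bound PGG h h'.
have ht : 1 < Mseq (S m) / Mseq m.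
  have := Mseq_lt m; have := Mseq_ge1 m => h1 h2.
  apply: (Rmult_lt_reg_r (Mseq m)); first lra.
  rewrite /Rdiv Rmult_assoc Rinv_l; lra.
have [c hc] := @ballC k abs habs I (fun i => (sval i).2)
   (fun i => Mseq m * kn (x - (sval i).1)%R) i0 _ hcompl ht hpos hpair.
apply: (ext_graph habs hchar (M := Mseq m) (M' := Mseq (S m)) (c := c)) => //.
  left; exact: Mseq_lt.
move=> d a h; have := hc (exist _ (d, a) h) => /= h1; apply: Rle_trans h1 _.
have hM1 := Mseq_ge1 m.
apply: Req_le; rewrite /Rdiv Rmult_assoc -(Rmult_assoc (/ Mseq m)) Rinv_l ?Rmult_1_l //; lra.
Qed.


Definition nextG (e : nat -> k) (m : nat) (G : k -> k -> Prop) : k -> k -> Prop :=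
  epsilon (inhabits G)
    (fun G' => PG abs p (Mseq (S m)) G' /\ gsub G G' /\ dom G' (e m)).

Fixpoint gseq (e : nat -> k) (m : nat) : k -> k -> Prop :=
  match m with O => B0 p | S m' => nextG e m' (gseq e m') end.

Lemma gseq_inv e m : PG abs p (Mseq m) (gseq e m) /\ gsub (B0 p) (gseq e m).
Proof.
elim: m => [|m [IH1 IH2]].
  split => //=; apply: PG_mono (PG_B0 habs hchar); exact: Mseq_ge1.
have := epsilon_spec (inhabits (gseq e m))
    (fun G' => PG abs p (Mseq (S m)) G' /\ gsub (gseq e m) G' /\ dom G' (e m))
    (step_ext (e m) IH1 IH2).
move=> [h1 [h2 h3]]; split; first exact: h1.
by move=> x a hxa; apply: h2; apply: IH2.
Qed.

Lemma gseq_step e m : gsub (gseq e m) (gseq e (S m)) /\ dom (gseq e (S m)) (e m).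
Proof.
have [IH1 IH2] := gseq_inv e m.
have := epsilon_spec (inhabits (gseq e m))
    (fun G' => PG abs p (Mseq (S m)) G' /\ gsub (gseq e m) G' /\ dom G' (e m))
    (step_ext (e m) IH1 IH2).
by move=> [_ [h2 h3]].
Qed.

Lemma gseq_mono e m n : (m <= n)%N -> gsub (gseq e m) (gseq e n).
Proof.
elim: n => [|n IH]; first by rewrite leqn0 => /eqP ->.
rewrite leq_eqVlt => /orP[/eqP -> //|]; rewrite ltnS => hmn x a h.
by apply: (proj1 (gseq_step e n)); apply: IH.
Qed.

Lemma case_ii_psi : case_ii abs p -> exists psi, psi_good abs p 2 psi.
Proof.
case=> V [hsub [hdense [Sb [e [_ [_ hspan]]]]]].
pose Gw x a := exists m, gseq e m x a.
have two : forall x a y b, Gw x a -> Gw y b ->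
    exists m, gseq e m x a /\ gseq e m y b.
  move=> x a y b [m1 h1] [m2 h2]; exists (maxn m1 m2); split.
    exact: (@gseq_mono e _ _ (leq_maxl m1 m2) _ _ h1).
  exact: (@gseq_mono e _ _ (leq_maxr m1 m2) _ _ h2).
have PGw : PG abs p 2 Gw.
  split; [|split; [|split]].
  - move=> x a b h1 h2; have [m [g1 g2]] := two _ _ _ _ h1 h2.
    have [[hf _] _] := gseq_inv e m; exact: hf g1 g2.
  - move=> x a y b h1 h2; have [m [g1 g2]] := two _ _ _ _ h1 h2.
    have [[_ [ha _]] _] := gseq_inv e m; exists m; exact: ha.
  - move=> l x a [m h]; have [[_ [_ [hs _]]] _] := gseq_inv e m; exists m; exact: hs.
  - move=> x a [m h]; have [[_ [_ [_ hb]]] _] := gseq_inv e m.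
    apply: Rle_trans (hb _ _ h) _; apply: Rmult_le_compat_r.
      exact: kp_norm_ge0.
    exact: Mseq_le2.
have Gw00 : Gw 0%R 0%R by exists O; rewrite /= /B0 (expr0p hchar).
have domV : forall x, V x -> dom Gw x.
  move=> x /hspan [s [c [_ [_ ->]]]]; rewrite /kp_comb.
  elim: s => [|i s [a IH]]; first by rewrite big_nil; exists 0%R.
  rewrite big_cons.
  have [b [m hb]] : dom Gw (e i).
    have [b hb] := proj2 (gseq_step e i); exists b; by exists (S i).
  have [_ [ha [hs _]]] := PGw.
  exists (c i * b + a)%R; apply: ha => //; apply: hs; by exists m.
have hext : forall G, PG abs p 2 G -> gsub Gw G -> forall x, ~ dom G x ->
    exists G', PG abs p 2 G' /\ gsub G G' /\ dom G' x.
  move=> G PGG subG x nd.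
  pose I := {z : k * k | G z.1 z.2}.
  have hpair : forall i j : I, abs ((sval i).2 - (sval j).2)%R <=
      Rmax (2 * kn (x - (sval i).1)%R) (2 * kn (x - (sval j).1)%R).
    move=> [[d a] h] [[d' a'] h'] /=; apply: (@pair_bound k abs p habs hchar 2 G x d a d' a') => //; lra.
  have hsmall : forall eps, 0 < eps -> exists i : I, 2 * kn (x - (sval i).1)%R < eps.
    move=> eps he; have [v [Vv hv]] := hdense x (eps / 2) ltac:(lra).
    have [a ha] := domV v Vv.
    have hv' : kn (x - v)%R < eps / 2 := hv.
    exists (exist _ (v, a) (subG _ _ ha)) => /=; lra.
  have [c hc] := @ball0 k abs habs I (fun i => (sval i).2)
     (fun i => 2 * kn (x - (sval i).1)%R) hcompl hpair hsmall.
  apply: (ext_graph habs hchar (M := 2) (M' := 2) (c := c)) => //; try lra.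
    by apply: subG.
  by move=> d a h; exact: (hc (exist _ (d, a) h)).
have [A [PA [sub tot]]] := zorn_total PGw Gw00 hext.
apply: psi_of_total PA _ tot; apply: sub; exists O; by rewrite /= /B0 expr1n.
Qed.
End CaseII.

End PartB6.

Section PartB7.
Local Open Scope R_scope.

Lemma min_nat (P : nat -> Prop) N : P N -> exists j, P j /\ forall i, (i < j)%N -> ~ P i.
Proof.
elim: N {-2}N (leqnn N) => [|N IH] M hM hP.
  move: hM; rewrite leqn0 => /eqP E; subst M; exists 0%N; split => // i; by rewrite ltn0.
case: (Classical_Prop.classic (exists i, (i <= N)%N /\ P i)) => [[i [hi Pi]]|hn].
  exact: IH hi Pi.
exists M; split => // i hi Pi; apply: hn; exists i; split => //.
by rewrite -ltnS; exact: leq_trans hi hM.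
Qed.

Section CaseIII.
Variables (k : fieldType) (abs : k -> R) (p : nat).
Hypothesis habs : nonarch_abs abs.
Hypothesis hchar : p \in [pchar k]%R.
Local Notation kn := (kp_norm abs p).

Lemma scaling (pi : k) s : pi <> 0%R -> abs pi < 1 -> 0 < s ->
  exists l : k, l <> 0%R /\ abs l * s <= 1 /\ abs pi < abs l * s.
Proof.
move=> npi hq hs.
move: hq; set q := abs pi => hq.
have q0 : 0 < q by apply: abs_neq0.
have hRq : Rabs q < 1 by rewrite Rabs_pos_eq; lra.
have qpos : forall i, 0 < q ^ i by move=> i; apply: pow_lt.
case: (Rle_dec s 1) => hs1.
  have [N hN] := pow_lt_1_zero q hRq s hs.
  have nQ : ~ (s <= q ^ N).
    have := hN N (le_n N); rewrite Rabs_pos_eq; [lra|left; exact: qpos].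
  have [j [hj hmin]] := @min_nat (fun j => ~ (s <= q ^ j)) N nQ.
  case: j hj hmin => [|i] hj hmin; first by exfalso; apply: hj; rewrite /=; lra.
  have hQi : s <= q ^ i by apply: NNPP; apply: hmin; exact: ltnSn.
  exists ((pi^-1) ^+ i)%R; split.
    by apply/eqP; rewrite expf_eq0 invr_eq0; apply/negP => /andP[_ /eqP].
  rewrite (absX habs) (absV habs npi) -/q pow_inv.
  have hqi := qpos i.
  split.
    apply: (Rmult_le_reg_l (q ^ i)) => //; rewrite -Rmult_assoc Rinv_r; lra.
  apply: (Rmult_lt_reg_l (q ^ i)) => //; rewrite -Rmult_assoc Rinv_r; last lra.
  rewrite Rmult_1_l; move/Rnot_le_lt: hj; rewrite /=; lra.
have hs1' : 1 < s by lra.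
have his : 0 < / s by apply: Rinv_0_lt_compat.
have [N hN] := pow_lt_1_zero q hRq (/ s) his.
have PN : q ^ N * s <= 1.
  have := hN N (le_n N); rewrite Rabs_pos_eq; last by left; exact: qpos.
  move=> h; apply: (Rmult_le_reg_r (/ s)) => //; rewrite Rmult_assoc Rinv_r; lra.
have [j [hj hmin]] := @min_nat (fun j => q ^ j * s <= 1) N PN.
case: j hj hmin => [|i] hj hmin; first by exfalso; move: hj; rewrite /=; lra.
have hPi : ~ (q ^ i * s <= 1) by apply: hmin; exact: ltnSn.
exists (pi ^+ i.+1)%R; split.
  by apply/eqP; rewrite expf_eq0 /=; apply/eqP.
rewrite (absX habs) -/q; split => //.
move/Rnot_le_lt: hPi => h; rewrite /=.
have := qpos i; nra.
Qed.


Lemma case_iii_psi : nontrivial_value_group abs -> kp_norm_polar abs p ->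
  exists M psi, psi_good abs p M psi.
Proof.
move=> [a [na ha1]] hpolar.
have [pi [npi hpi]] : exists pi : k, pi <> 0%R /\ abs pi < 1.
  case: (Rlt_dec (abs a) 1) => h; first by exists a.
  have h2 : 1 < abs a by have := abs_ge0 habs a; lra.
  exists (a^-1)%R; split.
    by apply/eqP; rewrite invr_eq0; apply/eqP.
  rewrite (absV habs na); rewrite -Rinv_1; apply: Rinv_lt_contravar; lra.
have hpi0 : 0 < abs pi by apply: abs_neq0.
set lam := (pi^-1)%R.
have hlam : 1 < abs lam.
  rewrite /lam (absV habs npi) -Rinv_1; apply: Rinv_lt_contravar; lra.
have hx0 : 1 < kn (lam ^+ p)%R by rewrite (kp_norm_pow habs hchar).
have [f [[fD fS] [fball fx0]]] := hpolar _ hx0.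
have fS' : forall l x, f (l ^+ p * x)%R = (l * f x)%R by exact: fS.
have f0 : f 0%R = 0%R by have := fS' 0%R 0%R; rewrite mulr0 mul0r.
have f1 : f 1%R <> 0%R.
  move=> h0; move: fx0; have -> : f (lam ^+ p)%R = (lam * f 1%R)%R.
    by rewrite -fS' mulr1.
  by rewrite h0 mulr0 (abs0 habs); lra.
have hb : forall y, abs (f y) <= / abs pi * kn y.
  move=> y; case: (eqVneq y 0%R) => [->|/eqP ny].
    by rewrite f0 (abs0 habs) (kp_norm0 abs p) Rmult_0_r; lra.
  have hs := kp_norm_pos abs p ny.
  have [l [nl [hl1 hl2]]] := scaling npi hpi hs.
  have hl0 : 0 < abs l by apply: abs_neq0.
  have : kn (l ^+ p * y)%R <= 1 by rewrite (kp_normZ habs hchar).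
  move/fball; rewrite fS' (absM habs) => h.
  have hfy := abs_ge0 habs (f y).
  have hq : abs pi * abs (f y) <= kn y.
    have : abs pi * abs (f y) <= abs l * kn y * abs (f y) by nra.
    nra.
  apply: (Rmult_le_reg_l (abs pi)) => //; rewrite -Rmult_assoc Rinv_r; lra.
exists (/ abs (f 1%R) * / abs pi), (fun y => (f 1%R)^-1 * f y)%R.
split; [|split; [|split]].
- by move=> x y; rewrite fD mulrDr.
- by move=> l x; rewrite fS' mulrCA.
- by rewrite mulVf //; apply/eqP.
- move=> x; rewrite (absM habs) (absV habs f1) Rmult_assoc.
  apply: Rmult_le_compat_l; last exact: hb.
  left; apply: Rinv_0_lt_compat; exact: abs_neq0.
Qed.
End CaseIII.

End PartB7.

Theorem corollaryD (k : fieldType) (p : nat) (abs : k -> R)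
  (hchar : p \in [pchar k]%R)
  (habs : nonarch_abs abs) (hcompl : abs_complete abs)
  (hnontriv : nontrivial_value_group abs)
  (n : nat) (hn : (0 < n)%N)
  (hcases : spherically_complete abs \/ case_ii abs p \/
            (value_group_not_discrete abs /\ kp_norm_polar abs p)) :
  tate_frobenius_split abs p n.
Proof.
have [M [psi [psiD [psiS [psi1 hb]]]]] : exists M psi, psi_good abs p M psi.
  case: hcases => [hsc|[h2|[_ h3]]].
  - by exists (IZR 1); exact: case_i habs hchar hsc.
  - by exists (IZR 2); exact: case_ii_psi habs hchar hcompl h2.
  - exact: case_iii_psi habs hchar hnontriv h3.
exact: (split_of_psi n hchar habs psiD psiS psi1 hb).
Qed.
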